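(* Let $K>2$, let $n_1<n_2$ be positive integers, and let $n_3,\dots,n_K$ be positive integers. Let $\tau$ be the time of the first emptying event and $p$ the type emptied at time $\tau$. Then for every $t$ with $\Pr[\tau=t]>0$, \[ \Pr[p=1\mid \tau=t]\ \ge\ \Pr[p=2\mid \tau=t]. \]
   Context: Initial stocks $\vec n^{(0)}=(n_1,\dots,n_K)$ of $K$ goodie types evolve as follows: at each step $t=1,2,\dots$, as long as at least two coordinates of $\vec n^{(t-1)}$ are nonzero, an index $i$ is chosen uniformly at random (independently of the past) among the indices with $n_i^{(t-1)}>0$, and $\vec n^{(t)}=\vec n^{(t-1)}-\vec e_i$ ($\vec e_i$ the $i$-th standard unit vector). The time of the first emptying event is $\tau=\min\{t : \exists i \text{ with } n_i^{(t)}=0 \text{ and } n_i^{(0)}>0\}$; exactly one type is emptied at that step, and $p$ denotes that type. *)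

(* Defs.v *)
From HB Require Import structures.
From mathcomp Require Import all_boot all_order all_algebra.
Set Implicit Arguments. Unset Strict Implicit. Unset Printing Implicit Defensive.
Import Order.TTheory GRing.Theory Num.Theory.

(* Stock vectors are functions 'I_K -> nat; goodie type i+1 is index i. *)

Definition dec_stock (K : nat) (s : 'I_K -> nat) (i : 'I_K) : 'I_K -> nat :=
  fun j => if j == i then (s j).-1 else s j.

Definition stock_after (K : nat) (n : 'I_K -> nat) (w : seq 'I_K) : 'I_K -> nat :=
  foldl (@dec_stock K) n w.

Definition nnz (K : nat) (s : 'I_K -> nat) : nat := #|[pred j | 0 < s j]|.

Local Open Scope ring_scope.

(* Probability that the process started at s makes the successive choices w:
   at each step, if at least two coordinates are nonzero, an index is chosen
   uniformly among those with positive coordinate; otherwise the process has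
   stopped (no further choice is made, probability 0 for any further step). *)
Fixpoint path_prob (R : realFieldType) (K : nat) (s : 'I_K -> nat) (w : seq 'I_K) : R :=
  match w with
  | [::] => 1
  | i :: w' =>
      if ((2 <= nnz s) && (0 < s i))%N
      then ((nnz s)%:R)^-1 * path_prob R (dec_stock s i) w'
      else 0
  end.
Local Close Scope ring_scope.

Definition emptied_type (K : nat) (n : 'I_K -> nat) (w : seq 'I_K) (i : 'I_K) : bool :=
  (stock_after n w i == 0) && (0 < n i).

Definition some_emptied (K : nat) (n : 'I_K -> nat) (w : seq 'I_K) : bool :=
  [exists i, emptied_type n w i].

(* the first emptying event happens exactly at the last step of w *)
Definition tau_is_len (K : nat) (n : 'I_K -> nat) (w : seq 'I_K) : bool :=
  some_emptied n w && [forall k : 'I_(size w), ~~ some_emptied n (take k w)].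

Definition Pr_tau (R : realFieldType) (K : nat) (n : 'I_K -> nat) (t : nat) : R :=
  (\sum_(w : t.-tuple 'I_K) (if tau_is_len n w then path_prob R n w else 0%R))%R.

Definition Pr_tau_p (R : realFieldType) (K : nat) (n : 'I_K -> nat) (t : nat)
  (i : 'I_K) : R :=
  (\sum_(w : t.-tuple 'I_K)
     (if tau_is_len n w && emptied_type n w i then path_prob R n w else 0%R))%R.

(* Main.v *)
Require Import Defs.
From HB Require Import structures.
From mathcomp Require Import all_boot all_order all_algebra.
From mathcomp Require Import fingroup perm.
From mathcomp Require Import zify.
Import Order.TTheory GRing.Theory Num.Theory.
Set Implicit Arguments. Unset Strict Implicit.

Lemma sum_tuple_cons (T : finType) (t : nat) (F : t.+1.-tuple T -> nat) :
  \sum_(w : t.+1.-tuple T) F w = \sum_(x : T) \sum_(w : t.-tuple T) F [tuple of x :: w].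
Proof.
rewrite pair_big /=.
rewrite (reindex (fun p : T * t.-tuple T => [tuple of p.1 :: p.2])) //=.
exists (fun w : t.+1.-tuple T => (thead w, [tuple of behead w])).
  by move=> [x w] _ /=; rewrite theadE; congr pair; apply: val_inj.
by move=> w _ /=; rewrite [RHS]tuple_eta.
Qed.

Fixpoint PP (K : nat) (i : 'I_K) (s : 'I_K -> nat) (w : seq 'I_K) : bool :=
  match w with
  | [::] => false
  | j :: w' => if w' is [::] then (s j == 1) && (j == i)
               else (1 < s j) && PP i (dec_stock s j) w'
  end.

Definition NN (K : nat) (i : 'I_K) (s : 'I_K -> nat) (t : nat) : nat :=
  \sum_(w : t.-tuple 'I_K) (PP i s w : nat).

Lemma PP_ext K (i : 'I_K) s s' w : s =1 s' -> PP i s w = PP i s' w.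
Proof.
elim: w s s' => [|j w IH] s s' E //=.
case: w IH => [|k w] IH; first by rewrite E.
rewrite E; congr andb; apply: IH => x; rewrite /dec_stock.
by case: (x == j); rewrite E.
Qed.

Lemma NN_ext K (i : 'I_K) s s' t : s =1 s' -> NN i s t = NN i s' t.
Proof. by move=> E; apply: eq_bigr => w _; rewrite (PP_ext i w E). Qed.

Lemma PP_perm K (i a b : 'I_K) s w :
  PP i s w = PP (tperm a b i) (s \o tperm a b) (map (tperm a b) w).
Proof.
elim: w s => [|j w IH] s //.
case: w IH => [|k w] IH; first by rewrite /= tpermK (inj_eq (@perm_inj _ _)).
have -> : PP (tperm a b i) (s \o tperm a b) (map (tperm a b) (j :: k :: w)) =
  (1 < s j) && PP (tperm a b i) (dec_stock (s \o tperm a b) (tperm a b j)) (map (tperm a b) (k::w)).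
  by rewrite /= tpermK.
have -> : PP i s (j :: k :: w) = (1 < s j) && PP i (dec_stock s j) (k :: w) by [].
congr andb; rewrite IH; apply: PP_ext => x /=.
rewrite /dec_stock /=; case: (x =P tperm a b j) => [->|ne]; first by rewrite tpermK eqxx.
case: eqP => // E; case: ne; by rewrite -E tpermK.
Qed.

Lemma NN_perm K (i a b : 'I_K) s t :
  NN i s t = NN (tperm a b i) (s \o tperm a b) t.
Proof.
pose f := fun w : t.-tuple 'I_K => map_tuple (tperm a b) w.
have fK : cancel f f.
  move=> w; apply: val_inj => /=; rewrite -map_comp -[RHS]map_id.
  by apply: eq_map => x /=; rewrite tpermK.
rewrite /NN [RHS](reindex_inj (can_inj fK)).
by apply: eq_bigr => w _; rewrite (PP_perm i a b s w).
Qed.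

Lemma NN_rec K (i : 'I_K) s t :
  NN i s t.+2 = \sum_(j : 'I_K) (if 1 < s j then NN i (dec_stock s j) t.+1 else 0).
Proof.
rewrite /NN sum_tuple_cons; apply: eq_bigr => j _.
case: ifP => h.
  apply: eq_bigr => w _ /=; case: w => [[|k w] sz] //=; by rewrite h.
by apply: big1 => w _ /=; case: w => [[|k w] sz] //=; rewrite h.
Qed.

Lemma NN0 K (i : 'I_K) s : NN i s 0 = 0.
Proof. by apply: big1 => w _; rewrite tuple0. Qed.

Lemma NN1 K (i : 'I_K) s : NN i s 1 = (s i == 1).
Proof.
rewrite /NN (sum_tuple_cons (fun w => (PP i s w : nat))).
rewrite (eq_bigr (fun x => ((s x == 1) && (x == i)) : nat)); last first.
  move=> x _; rewrite (eq_bigr (fun _ => ((s x == 1) && (x == i)) : nat)).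
    by rewrite sum_nat_const card_tuple expn0 mul1n.
  by move=> w _; rewrite tuple0.
rewrite (bigD1 i) //= eqxx andbT big1 ?addn0 // => j /negPf ->.
by rewrite andbF.
Qed.

Lemma NN_le K (i1 i2 : 'I_K) t : forall s, (forall j, 0 < s j) -> s i1 <= s i2 ->
  NN i2 s t <= NN i1 s t.
Proof.
elim: t => [|t IH] s pos le; first by rewrite !NN0.
have [eq12|lt12] := eqVneq (s i1) (s i2).
  rewrite (NN_perm i2 i1 i2) tpermR (NN_ext i1 (s := s \o tperm i1 i2) (s' := s)) //.
  by move=> x /=; case: tpermP => // ->.
have {}lt12 : s i1 < s i2 by rewrite ltn_neqAle lt12.
case: t IH => [|t] IH.
  rewrite !NN1; case: eqP => // h; have := pos i1; lia.
rewrite !NN_rec; apply: leq_sum => j _; case: ifP => // hj.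
apply: IH.
  by move=> k; rewrite /dec_stock; case: eqP => // ->; move: hj; case: (s j) => // [[]].
rewrite /dec_stock; case: eqP; case: eqP => _ _; lia.
Qed.

Lemma forall_ordS m (P : nat -> bool) :
  [forall k : 'I_m.+1, P k] = P 0 && [forall k : 'I_m, P k.+1].
Proof.
apply/forallP/andP => [H|[H0 H] k].
  split; first exact: (H ord0).
  by apply/forallP => k; exact: (H (lift ord0 k)).
case: k => [[|k] lt] //=; exact: (forallP H (Ordinal (lt : k < m))).
Qed.

Lemma emptied_cons K (s : 'I_K -> nat) j x i : 1 < s j ->
  emptied_type s (j :: x) i = emptied_type (dec_stock s j) x i.
Proof.
move=> hj; rewrite /emptied_type /stock_after /=; congr andb.
rewrite /dec_stock; case: eqP => // ->; lia.
Qed.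

Lemma some_cons K (s : 'I_K -> nat) j x : 1 < s j ->
  some_emptied s (j :: x) = some_emptied (dec_stock s j) x.
Proof.
by move=> hj; rewrite /some_emptied; apply: eq_existsb => i; rewrite emptied_cons.
Qed.

Lemma some_nil K (s : 'I_K -> nat) : some_emptied s [::] = false.
Proof.
by apply/existsP => -[i]; rewrite /emptied_type /stock_after /=; case: (s i).
Qed.

Lemma tauE K (n : 'I_K -> nat) w i :
  tau_is_len n w && emptied_type n w i =
  [forall k : 'I_(size w), ~~ some_emptied n (take k w)] && emptied_type n w i.
Proof.
rewrite /tau_is_len; case E: (emptied_type n w i); rewrite ?andbF ?andbT //.
by have -> : some_emptied n w by apply/existsP; exists i.
Qed.

Lemma tau_PP K (i : 'I_K) w : forall s, (forall j, 0 < s j) ->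
  tau_is_len s w && emptied_type s w i = PP i s w.
Proof.
elim: w => [|j w IH] s pos.
  by rewrite /tau_is_len some_nil.
rewrite tauE (forall_ordS (size w) (fun k => ~~ some_emptied s (take k (j :: w)))).
rewrite [take 0 _]/= some_nil andTb.
have tk : forall k, take k.+1 (j :: w) = j :: take k w by [].
case: w IH tk => [|k w] IH tk.
  have f : [forall k0 : 'I_0, ~~ some_emptied s (take k0.+1 [:: j])].
    by apply/forallP => -[].
  rewrite f andTb /emptied_type /stock_after /= /dec_stock.
  have := pos i; have := pos j.
  case: (i =P j) => [->|ne]; first by rewrite eqxx andbT; case: (s j) => [|[|m]].
  rewrite (_ : (j == i) = false) ?andbF; last by apply/eqP => E; apply: ne.
  by case: (s i).
case: (ltnP 1 (s j)) => hj.
  have -> : PP i s [:: j, k & w] = PP i (dec_stock s j) (k :: w) by rewrite /= hj.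
  rewrite -IH; last first.
    by move=> k'; rewrite /dec_stock; case: eqP => // ->; lia.
  rewrite tauE emptied_cons //; congr andb.
  by apply: eq_forallb => k'; rewrite tk some_cons.
rewrite (forall_ordS (size w) (fun k0 => ~~ some_emptied s (take k0.+1 [:: j, k & w]))).
rewrite tk [take 0 _]/= (_ : some_emptied s [:: j] = true) //.
  by rewrite /= (_ : (1 < s j) = false) //; apply/negbTE; rewrite -leqNgt.
apply/existsP; exists j; rewrite /emptied_type /stock_after /= /dec_stock eqxx.
have := pos j; lia.
Qed.

Lemma nnz_pos K (s : 'I_K -> nat) : (forall j, 0 < s j) -> nnz s = K.
Proof.
move=> pos; rewrite /nnz -[RHS]card_ord; apply: eq_card => j.
by rewrite !inE pos.
Qed.

Local Open Scope ring_scope.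

Lemma path_prob_PP (R : realFieldType) K (i : 'I_K) w : (2 < K)%N ->
  forall s, (forall j, (0 < s j)%N) -> PP i s w ->
  path_prob R s w = (K%:R^-1) ^+ size w.
Proof.
move=> hK; elim: w => [|j w IH] s pos //.
have hn : (2 <= nnz s)%N by rewrite nnz_pos // ltnW.
case: w IH => [|k w] IH.
  by move=> /= /andP[/eqP hj _]; rewrite hn pos /= nnz_pos // mulr1 expr1.
move=> /andP[hj hP].
have -> : path_prob R s [:: j, k & w] = (nnz s)%:R^-1 * path_prob R (dec_stock s j) (k::w).
  by rewrite /= hn pos.
rewrite nnz_pos // (IH (dec_stock s j)) //.
by move=> k'; rewrite /dec_stock; case: eqP => // ->; lia.
Qed.

Lemma Pr_tau_pE (R : realFieldType) K (n : 'I_K -> nat) t i : (2 < K)%N ->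
  (forall j, (0 < n j)%N) ->
  Pr_tau_p R n t i = (NN i n t)%:R * (K%:R^-1) ^+ t.
Proof.
move=> hK pos; rewrite /Pr_tau_p /NN natr_sum mulr_suml; apply: eq_bigr => w _.
rewrite tau_PP //; case E: (PP i n w); last by rewrite mul0r.
by rewrite mul1r (path_prob_PP R hK pos E) size_tuple.
Qed.

Theorem lemma12 (R : realFieldType) (K : nat) (hK : (2 < K)%N)
  (n : 'I_K -> nat) (i1 i2 : 'I_K) (h1 : val i1 = 0%N) (h2 : val i2 = 1%N)
  (hpos : forall j, (0 < n j)%N) (h12 : (n i1 < n i2)%N) (t : nat)
  (ht : 0 < Pr_tau R n t) :
  Pr_tau_p R n t i2 / Pr_tau R n t <= Pr_tau_p R n t i1 / Pr_tau R n t.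
Proof.
apply: ler_wpM2r; first by rewrite invr_ge0 ltW.
rewrite !Pr_tau_pE //; apply: ler_wpM2r.
  by apply: exprn_ge0; rewrite invr_ge0 ler0n.
by rewrite ler_nat; apply: NN_le => //; apply: ltnW.
Qed.
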